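(* Let $R$ be a commutative ring and $F$ a countably presented flat $R$-module. Let $T \subseteq R$ be a multiplicative subset such that $T^{-1}F$ is a projective $T^{-1}R$-module. Then there is a countable multiplicative subset $S \subseteq T$ such that $S^{-1}F$ is a projective $S^{-1}R$-module. *)

(* Defs.v *)
(* commutative rings as comPzRingType (possibly the zero ring,
   since a localization can be the zero ring), modules as lmodType. *)
From HB Require Import structures.
From mathcomp Require Import all_boot all_algebra.
Set Implicit Arguments. Unset Strict Implicit. Unset Printing Implicit Defensive.
Import GRing.Theory.
Local Open Scope ring_scope.

Section Defs.
Variable R : comPzRingType.

Definition multiplicative (S : R -> Prop) : Prop :=
  S 1 /\ (forall a b, S a -> S b -> S (a * b)).

(* countable subset: enumerated by nat (S is nonempty when multiplicative) *)
Definition countable_subset (S : R -> Prop) : Prop :=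
  exists e : nat -> R, forall r, S r <-> exists n, e n = r.

Definition lincomb (F : lmodType R) (c : seq R) (x : nat -> F) : F :=
  \sum_(i < size c) c`_i *: x i.

(* countably presented: exact sequence R^(N) --rel--> R^(N) --x--> F --> 0,
   elements of R^(N) being finitely supported sequences (seq R) *)
Definition countably_presented (F : lmodType R) : Prop :=
  exists (x : nat -> F) (rel : nat -> seq R),
    [/\ forall v : F, exists c : seq R, v = lincomb c x,
        forall k, lincomb (rel k) x = 0
      & forall c : seq R, lincomb c x = 0 ->
          exists d : seq R, forall i, c`_i = \sum_(k < size d) d`_k * (rel k)`_i].

Definition balanced (M N : lmodType R) (A : zmodType) (b : M -> N -> A) : Prop :=
  [/\ forall m m' n, b (m + m') n = b m n + b m' n,
      forall m n n', b m (n + n') = b m n + b m n'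
    & forall r m n, b (r *: m) n = b m (r *: n)].

(* the element sum_i m_i (x) n_i of M (x)_R N is zero, i.e. it is killed by
   every balanced map (universal property of the tensor product) *)
Definition tensor_zero (M N : lmodType R) (s : seq (M * N)) : Prop :=
  forall (A : zmodType) (b : M -> N -> A), balanced b ->
    \sum_(p <- s) b p.1 p.2 = 0.

(* flat: - (x)_R F preserves injective linear maps *)
Definition flat (F : lmodType R) : Prop :=
  forall (M N : lmodType R) (f : {linear M -> N}), injective f ->
    forall s : seq (M * F),
      tensor_zero [seq (f p.1, p.2) | p <- s] -> tensor_zero s.

(* phi : R -> R' is a localization of R at S (as Mathlib's IsLocalization) *)
Definition is_localization (S : R -> Prop) (R' : comPzRingType)
    (phi : {rmorphism R -> R'}) : Prop :=
  [/\ forall s, S s -> exists y, phi s * y = 1,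
      forall z : R', exists r s, S s /\ z * phi s = phi r
    & forall r, phi r = 0 -> exists s, S s /\ s * r = 0].

(* (R', F') is the localization S^-1 R, S^-1 F with structure maps phi, psi
   (as Mathlib's IsLocalization + IsLocalizedModule) *)
Definition is_localization_module (S : R -> Prop) (F : lmodType R)
    (R' : comPzRingType) (phi : {rmorphism R -> R'}) (F' : lmodType R')
    (psi : F -> F') : Prop :=
  [/\ is_localization S phi,
      forall x y, psi (x + y) = psi x + psi y,
      forall r x, psi (r *: x) = phi r *: psi x,
      forall z : F', exists x s, S s /\ phi s *: z = psi x
    & forall x, psi x = 0 -> exists s, S s /\ s *: x = 0].

End Defs.

Definition projective (R : pzRingType) (P : lmodType R) : Prop :=
  forall (M N : lmodType R) (g : {linear M -> N}) (f : {linear P -> N}),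
    (forall n, exists m, g m = n) ->
    exists h : {linear P -> M}, forall p, g (h p) = f p.

(* Main.v *)
Require Import Defs.
From HB Require Import structures.
From mathcomp Require Import all_boot all_algebra.
From mathcomp Require Import ring.
From mathcomp Require Import finmap.
From mathcomp.multinomials Require Import monalg.
From Stdlib Require Import ClassicalEpsilon.
Local Open Scope ring_scope.

Module Aux.
Set Implicit Arguments. Unset Strict Implicit. Unset Printing Implicit Defensive.
Import GRing.Theory.
Local Open Scope ring_scope.

Section L.
Variables (R : pzRingType) (U V : lmodType R) (f : U -> V) (lf : linear f).
Definition mkLin : U -> V := let _ := lf in f.
HB.instance Definition _ := GRing.isLinear.Build R U V _ mkLin lf.
End L.

Lemma sum_widen (V : zmodType) (f : nat -> V) K1 K2 : (K1 <= K2)%N ->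
  (forall i, (K1 <= i)%N -> f i = 0) -> \sum_(i < K1) f i = \sum_(i < K2) f i.
Proof.
move=> le h; rewrite -!(big_mkord xpredT) (@big_cat_nat _ _ _ K1 0 K2 _ _ (leq0n K1) le) /=.
rewrite [X in _ + X]big1_seq ?addr0 // => i /andP[_]; rewrite mem_index_iota.
by case/andP=> hi _; exact: h.
Qed.

Definition fmod (R : pzRingType) := malg nat R.
HB.instance Definition _ (R : pzRingType) := GRing.Zmodule.on (fmod R).

Section FM.
Variable R : pzRingType.
Implicit Types g : fmod R.
Definition fscale (c : R) (g : fmod R) : fmod R :=
  \sum_(k <- msupp g) << c * g@_k *g k >>.
Lemma fscaleE c g k : (fscale c g)@_k = c * g@_k.
Proof.
rewrite {2}[g]monalgE !raddf_sum mulr_sumr.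
by apply/eq_bigr=> /= i _; rewrite !mcoeffU mulrnAr.
Qed.
Lemma fscaleA c1 c2 g : fscale c1 (fscale c2 g) = fscale (c1 * c2) g.
Proof. by apply/malgP=> x; rewrite !fscaleE mulrA. Qed.
Lemma fscale1r g : fscale 1 g = g.
Proof. by apply/malgP=> k; rewrite !fscaleE mul1r. Qed.
Lemma fscaleDr c g1 g2 : fscale c (g1 + g2) = fscale c g1 + fscale c g2.
Proof. by apply/malgP=> k; rewrite !(mcoeffD, fscaleE) mulrDr. Qed.
Lemma fscaleDl g c1 c2: fscale (c1 + c2) g = fscale c1 g + fscale c2 g.
Proof. by apply/malgP=> x; rewrite !(mcoeffD, fscaleE) mulrDl. Qed.
HB.instance Definition _ := GRing.Zmodule_isLmodule.Build R (fmod R)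
  fscaleA fscale1r fscaleDr fscaleDl.
Lemma fcoeffZ c g k : (c *: g)@_k = c * g@_k.
Proof. exact: fscaleE. Qed.
Lemma fcoeffD g1 g2 k : (g1 + g2)@_k = g1@_k + g2@_k.
Proof. exact: mcoeffD. Qed.
Definition fbnd g : nat := \max_(k <- msupp g) k.+1.
Lemma fbndP g k : (fbnd g <= k)%N -> g@_k = 0.
Proof.
move=> h; apply: mcoeff_outdom; apply/negP=> kin.
have : (k.+1 <= fbnd g)%N by rewrite /fbnd (big_rem k kin) /= leq_maxl.
by rewrite ltnNge h.
Qed.
End FM.

Section Sside.
Variables (R : comPzRingType) (F : lmodType R) (x : nat -> F) (rel : nat -> seq R).
Hypothesis relK : forall k, lincomb (rel k) x = 0.
Hypothesis relC : forall c : seq R, lincomb c x = 0 ->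
  exists d : seq R, forall i, c`_i = \sum_(k < size d) d`_k * (rel k)`_i.
Hypothesis gen : forall v : F, exists c : seq R, v = lincomb c x.
Variables (N : nat -> nat) (t u : nat -> R) (r v : nat -> nat -> R).
Hypothesis rN : forall n l, (N n <= l)%N -> r n l = 0.
Hypothesis AT : forall n, u n *: (\sum_(l < N n) r n l *: x l - t n *: x n) = 0.
Definition qq k (i : 'I_(size (rel k))) := \prod_(j < size (rel k) | j != i) t j.
Arguments qq : clear implicits.
Hypothesis BT : forall k l,
  v k l * (\sum_(i < size (rel k)) (rel k)`_i * qq k i * r i l) = 0.
Variables (S : R -> Prop) (RS : comPzRingType) (phi : {rmorphism R -> RS})
  (FS : lmodType RS) (psi : F -> FS).
Hypothesis loc : is_localization_module S phi psi.
Hypotheses (S1 : S 1) (SM : forall a b, S a -> S b -> S (a * b))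
  (St : forall n, S (t n)) (Su : forall n, S (u n)) (Sv : forall k l, S (v k l)).

Lemma psiD a b : psi (a + b) = psi a + psi b. Proof. by case: loc. Qed.
Lemma psiZ a b : psi (a *: b) = phi a *: psi b. Proof. by case: loc. Qed.
Lemma psi0 : psi 0 = 0.
Proof. have h := psiD 0 0; rewrite addr0 in h; apply: (addrI (psi 0)). by rewrite addr0 -h. Qed.
Lemma psiN a : psi (- a) = - psi a.
Proof. by apply/eqP; rewrite -subr_eq0 opprK -psiD addNr psi0. Qed.
Lemma psiB a b : psi (a - b) = psi a - psi b. Proof. by rewrite psiD psiN. Qed.
Lemma psi_sum K (G : 'I_K -> F) : psi (\sum_(i < K) G i) = \sum_(i < K) psi (G i).
Proof. exact: (big_morph psi psiD psi0). Qed.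

Definition inv s : RS := epsilon (inhabits 0) (fun y => phi s * y = 1).
Lemma invP s : S s -> phi s * inv s = 1.
Proof.
case: loc => [[h _ _] _ _ _ _] /h ex; exact: (epsilon_spec (inhabits 0) _ ex).
Qed.
Lemma unit_mod (M : lmodType RS) s (a b : M) : S s -> phi s *: a = phi s *: b -> a = b.
Proof.
move=> Ss e; have := congr1 (fun m => inv s *: m) e.
by rewrite /= !scalerA !(mulrC (inv s)) invP // !scale1r.
Qed.
Lemma unit_ring s (a b : RS) : S s -> phi s * a = phi s * b -> a = b.
Proof.
move=> Ss e; have := congr1 (fun m => inv s * m) e.
by rewrite /= !mulrA !(mulrC (inv s)) invP // !mul1r.
Qed.
Lemma S_prod K (G : nat -> R) : (forall i, S (G i)) -> S (\prod_(i < K) G i).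
Proof.
move=> h; elim: K => [|K IH]; first by rewrite big_ord0.
by rewrite big_ord_recr /=; apply: SM.
Qed.

Definition al n l := phi (r n l) * inv (t n).

Lemma coordS k l : \sum_(i < size (rel k)) phi ((rel k)`_i) * al i l = 0.
Proof.
have SQ : S (\prod_(j < size (rel k)) t j) by apply: S_prod.
apply: (unit_ring SQ); rewrite mulr0.
have w0 : phi (\sum_(i < size (rel k)) (rel k)`_i * qq k i * r i l) = 0.
  by apply: (unit_ring (Sv k l)); rewrite -rmorphM BT rmorph0 mulr0.
apply: (eq_trans _ w0); rewrite rmorph_sum mulr_sumr; apply: eq_bigr => i _.
rewrite (bigD1 i) //= -/(qq k i) /al !rmorphM.
have := invP (St i); move: (phi (t i)) (inv (t i)) => a b ab.
by rewrite -[RHS]mulr1 -ab; ring.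
Qed.


Lemma al0 n l : (N n <= l)%N -> al n l = 0.
Proof. by move=> h; rewrite /al rN // rmorph0 mul0r. Qed.

Definition lcN (c : nat -> R) K : F := \sum_(i < K) c i *: x i.

Lemma AS n : \sum_(l < N n) al n l *: psi (x l) = psi (x n).
Proof.
have h0 : psi (\sum_(l < N n) r n l *: x l - t n *: x n) = 0.
  by apply: (unit_mod (Su n)); rewrite -psiZ AT psi0 scaler0.
rewrite psiB psi_sum psiZ in h0; move/eqP: h0; rewrite subr_eq0 => /eqP h0.
apply: (unit_mod (St n)); rewrite -h0 scaler_sumr; apply: eq_bigr => l _.
by rewrite psiZ /al scalerA mulrCA invP // mulr1.
Qed.

Lemma sum_diff (V : zmodType) (G : R -> nat -> V)
  (GB : forall a b i, G (a - b) i = G a i - G b i) (c1 c2 : nat -> R) K1 K2 :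
  \sum_(i < maxn K1 K2) G ((if (i < K1)%N then c1 i else 0)
                            - (if (i < K2)%N then c2 i else 0)) i
  = \sum_(i < K1) G (c1 i) i - \sum_(i < K2) G (c2 i) i.
Proof.
have G0 i : G 0 i = 0 by have := GB 0 0 i; rewrite !subrr.
under eq_bigr do rewrite GB.
rewrite sumrB; congr (_ - _); symmetry.
  transitivity (\sum_(i < K1) G (if (i < K1)%N then c1 i else 0) i).
    by apply: eq_bigr => i _; rewrite ltn_ord.
  apply: (sum_widen (f := fun i => G (if (i < K1)%N then c1 i else 0) i)).
    exact: leq_maxl.
  by move=> i hi; rewrite ltnNge hi G0.
transitivity (\sum_(i < K2) G (if (i < K2)%N then c2 i else 0) i).
  by apply: eq_bigr => i _; rewrite ltn_ord.
apply: (sum_widen (f := fun i => G (if (i < K2)%N then c2 i else 0) i)).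
  exact: leq_maxr.
by move=> i hi; rewrite ltnNge hi G0.
Qed.

Lemma lcN_diff c1 c2 K1 K2 :
  lcN (fun i => (if (i < K1)%N then c1 i else 0)
                - (if (i < K2)%N then c2 i else 0)) (maxn K1 K2)
  = lcN c1 K1 - lcN c2 K2.
Proof.
exact: (sum_diff (G := fun a i => a *: x i) (fun a b i => scalerBl _ _ _)).
Qed.

Lemma lc_ex z : exists c K, z = lcN c K.
Proof. by case: (gen z) => c ->; exists (fun i => c`_i), (size c). Qed.

Section Lift.
Variables (M Nn : lmodType RS) (g : {linear M -> Nn}) (f : {linear FS -> Nn}).
Hypothesis gs : forall n, exists m, g m = n.

Definition mm l : M := epsilon (inhabits 0) (fun m => g m = f (psi (x l))).
Lemma mmP l : g (mm l) = f (psi (x l)).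
Proof. exact: (epsilon_spec (inhabits 0) (fun m => g m = _) (gs _)). Qed.

Definition be n := \sum_(l < N n) al n l *: mm l.
Definition LL (c : nat -> R) K := \sum_(i < K) phi (c i) *: be i.

Lemma relS k : \sum_(i < size (rel k)) phi ((rel k)`_i) *: be i = 0.
Proof.
set K := size (rel k).
pose Nm := \max_(i < K) N i.
have hN : forall i : 'I_K, (N i <= Nm)%N by move=> i; apply: (leq_bigmax i).
transitivity (\sum_(i < K) phi (rel k)`_i *: \sum_(l < Nm) al i l *: mm l).
  apply: eq_bigr => i _; congr (_ *: _).
  apply: (sum_widen (f := fun l => al i l *: mm l)) => // l hl.
  by rewrite al0 // scale0r.
under eq_bigr do rewrite scaler_sumr.
rewrite exchange_big /=; apply: big1 => l _.
under eq_bigr do rewrite scalerA.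
by rewrite -scaler_suml coordS scale0r.
Qed.

Lemma LL_WD0 c K : lcN c K = 0 -> LL c K = 0.
Proof.
move=> h; pose s := mkseq c K.
have hs : lincomb s x = 0.
  by rewrite /lincomb size_mkseq; apply: (eq_trans _ h); apply: eq_bigr => i _; rewrite nth_mkseq.
case: (relC hs) => d hd.
pose B := maxn K (\max_(j < size d) size (rel j)).
transitivity (\sum_(i < B) phi s`_i *: be i).
  transitivity (\sum_(i < K) phi s`_i *: be i).
    by apply: eq_bigr => i _; rewrite nth_mkseq.
  apply: (sum_widen (f := fun i => phi s`_i *: be i)); first exact: leq_maxl.
  by move=> i hi; rewrite nth_default ?size_mkseq // rmorph0 scale0r.
under eq_bigr do rewrite hd rmorph_sum scaler_suml.
rewrite exchange_big /=; apply: big1 => j _.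
under eq_bigr do rewrite rmorphM -scalerA.
rewrite -scaler_sumr -(@sum_widen _ (fun i => phi (rel j)`_i *: be i) (size (rel j))).
- by rewrite relS scaler0.
- exact: leq_trans (leq_bigmax j) (leq_maxr _ _).
by move=> i hi; rewrite nth_default // rmorph0 scale0r.
Qed.

Lemma LL_diff c1 c2 K1 K2 :
  LL (fun i => (if (i < K1)%N then c1 i else 0)
                - (if (i < K2)%N then c2 i else 0)) (maxn K1 K2)
  = LL c1 K1 - LL c2 K2.
Proof.
apply: (sum_diff (G := fun a i => phi a *: be i)).
by move=> a b i; rewrite rmorphB scalerBl.
Qed.

Lemma LL_WD c1 K1 c2 K2 : lcN c1 K1 = lcN c2 K2 -> LL c1 K1 = LL c2 K2.
Proof.
move=> e; apply/eqP; rewrite -subr_eq0 -LL_diff; apply/eqP; apply: LL_WD0.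
by rewrite lcN_diff e subrr.
Qed.

Definition cF (z : F) : seq R :=
  epsilon (inhabits [::]) (fun c => z = lincomb c x).
Lemma cFP z : z = lcN (fun i => (cF z)`_i) (size (cF z)).
Proof. exact: (epsilon_spec (inhabits [::]) (fun c => z = lincomb c x) (gen z)). Qed.

Definition Wm (z : F) : M := LL (fun i => (cF z)`_i) (size (cF z)).
Lemma Wm_lc c K : Wm (lcN c K) = LL c K.
Proof. by apply: LL_WD; rewrite -cFP. Qed.

Lemma WmB a b : Wm (a - b) = Wm a - Wm b.
Proof.
move: (lc_ex a) (lc_ex b) => [c1 [K1 ->]] [c2 [K2 ->]].
by rewrite -lcN_diff !Wm_lc LL_diff.
Qed.
Lemma Wm0 : Wm 0 = 0.
Proof. by have := WmB 0 0; rewrite !subrr. Qed.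
Lemma WmN a : Wm (- a) = - Wm a.
Proof. by have := WmB 0 a; rewrite !sub0r Wm0 sub0r. Qed.
Lemma WmD a b : Wm (a + b) = Wm a + Wm b.
Proof. by rewrite -{1}[b]opprK WmB WmN opprK. Qed.
Lemma WmZ a z : Wm (a *: z) = phi a *: Wm z.
Proof.
move: (lc_ex z) => [c [K ->]].
have -> : a *: lcN c K = lcN (fun i => a * c i) K.
  by rewrite /lcN scaler_sumr; apply: eq_bigr => i _; rewrite scalerA.
rewrite !Wm_lc /LL scaler_sumr; apply: eq_bigr => i _.
by rewrite rmorphM scalerA.
Qed.

Lemma gWm z : g (Wm z) = f (psi z).
Proof.
move: (lc_ex z) => [c [K ->]].
rewrite Wm_lc /LL /lcN psi_sum !linear_sum; apply: eq_bigr => i _.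
rewrite !linearZ psiZ linearZ /=; congr (_ *: _).
rewrite /be linear_sum -AS linear_sum; apply: eq_bigr => l _.
by rewrite !linearZ /= mmP.
Qed.

Definition rep (z : FS) : R * F :=
  epsilon (inhabits (0, 0)) (fun p => S p.1 /\ phi p.1 *: z = psi p.2).
Lemma repP z : S (rep z).1 /\ phi (rep z).1 *: z = psi (rep z).2.
Proof.
apply: (epsilon_spec (inhabits (0, 0)) (fun p => S p.1 /\ phi p.1 *: z = psi p.2)).
case: loc => [_ _ _ hz _]; case: (hz z) => w [s [Ss e]].
by exists (s, w).
Qed.

Definition hh z : M := inv (rep z).1 *: Wm (rep z).2.

Lemma hhP z s w : S s -> phi s *: z = psi w -> phi s *: hh z = Wm w.
Proof.
move=> Ss e; case: (repP z) => Ss' e'.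
rewrite /hh; move: Ss' e'; set s' := (rep z).1; set w' := (rep z).2 => Ss' e'.
have k0 : psi (s' *: w - s *: w') = 0.
  by rewrite psiB !psiZ -e -e' !scalerA mulrC subrr.
case: loc => [_ _ _ _ hk]; case: (hk _ k0) => o [So eo].
have : phi o *: (phi s' *: Wm w - phi s *: Wm w') = 0.
  by rewrite -!WmZ -WmB -WmZ eo Wm0.
rewrite -(scaler0 _ (phi o)) => /(unit_mod So) /eqP; rewrite subr_eq0 => /eqP e2.
apply: (unit_mod Ss'); rewrite e2 !scalerA.
by rewrite mulrAC invP // mul1r.
Qed.

Lemma hh_lin : linear hh.
Proof.
move=> a z1 z2.
case: loc => [[_ hr _] _ _ hz _].
case: (hr a) => r3 [s3 [S3 e3]].
case: (hz z1) => w1 [s1 [S1' e1]]; case: (hz z2) => w2 [s2 [S2' e2]].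
have Ss : S (s1 * s2 * s3) by apply: SM => //; apply: SM.
have ew : phi (s1 * s2 * s3) *: (a *: z1 + z2)
          = psi ((s2 * r3) *: w1 + (s1 * s3) *: w2).
  rewrite psiD !psiZ -e1 -e2 !scalerA scalerDr !scalerA !rmorphM -e3.
  by congr (_ *: _ + _ *: _); ring.
apply: (unit_mod Ss); rewrite (hhP Ss ew) WmD !WmZ -(hhP S1' e1) -(hhP S2' e2).
rewrite scalerDr !scalerA !rmorphM -e3.
by congr (_ *: _ + _ *: _); ring.
Qed.

Lemma ghh z : g (hh z) = f z.
Proof.
case: (repP z) => Ss e; apply: (unit_mod Ss).
rewrite -[phi _ *: g _]linearZ /= (hhP Ss e) gWm -e linearZ //.
Qed.

End Lift.

Lemma projS : projective FS.
Proof.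
move=> M Nn g f gs; exists (mkLin (hh_lin g f)) => p /=.
exact: ghh.
Qed.

End Sside.

Section Tside.
Variables (R : comPzRingType) (F : lmodType R) (x : nat -> F) (rel : nat -> seq R).
Hypothesis relK : forall k, lincomb (rel k) x = 0.
Hypothesis gen : forall v : F, exists c : seq R, v = lincomb c x.
Variables (T : R -> Prop) (RT : comPzRingType) (phi : {rmorphism R -> RT})
  (FT : lmodType RT) (psi : F -> FT).
Hypothesis loc : is_localization_module T phi psi.
Hypothesis TM : Defs.multiplicative T.

Definition gT (v : fmod RT) : FT := \sum_(k < fbnd v) v@_(k : nat) *: psi (x k).

Lemma gT_any (v : fmod RT) K : (forall k, (K <= k)%N -> v@_k = 0) ->
  gT v = \sum_(k < K) v@_(k : nat) *: psi (x k).
Proof.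
move=> h; rewrite /gT (@sum_widen _ (fun k => v@_k *: psi (x k)) _ (maxn (fbnd v) K)).
- apply: esym; apply: (@sum_widen _ (fun k => v@_k *: psi (x k))).
    exact: leq_maxr.
  by move=> k hk; rewrite h // scale0r.
- exact: leq_maxl.
by move=> k hk; rewrite fbndP // scale0r.
Qed.

Lemma gT_lin : linear gT.
Proof.
move=> a v w.
set K := maxn (fbnd (a *: v + w)) (maxn (fbnd v) (fbnd w)).
have hK (y : fmod RT) : (fbnd y <= K)%N -> forall k, (K <= k)%N -> y@_k = 0.
  by move=> hy k hk; apply: fbndP; apply: leq_trans hk.
rewrite (gT_any (hK _ (leq_maxl _ _))).
rewrite (gT_any (hK v _)); last by rewrite /K leq_max leq_maxl orbT.
rewrite (gT_any (hK w _)); last by rewrite /K leq_max leq_maxr orbT.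
rewrite scaler_sumr -big_split /=; apply: eq_bigr => k _.
by rewrite fcoeffD fcoeffZ scalerDl scalerA.
Qed.

Lemma gT_unit (a : RT) i : gT (<< a *g i >> : fmod RT) = a *: psi (x i).
Proof.
rewrite (gT_any (K := i.+1)); last first.
  by move=> k hk; rewrite mcoeffU eq_sym (gtn_eqF hk) mulr0n.
rewrite big_ord_recr /= mcoeffU eqxx mulr1n big1 ?add0r // => j _.
by rewrite mcoeffU eq_sym (ltn_eqF (ltn_ord j)) mulr0n scale0r.
Qed.

Lemma gT_surj z : exists v, mkLin gT_lin v = z.
Proof.
case: loc => [[hu _ _] _ _ hz _].
case: (hz z) => w [s [Ts e]]; case: (hu s Ts) => y hy; case: (gen w) => c ec.
exists (\sum_(i < size c) (<< y * phi c`_i *g (i : nat) >> : fmod RT)).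
rewrite linear_sum /=.
have ez : z = y *: psi w by rewrite -e scalerA mulrC hy scale1r.
rewrite ez ec /lincomb (psi_sum loc) scaler_sumr; apply: eq_bigr => i _.
by rewrite /mkLin gT_unit (psiZ loc) scalerA.
Qed.

Section TData.
Variables (hT : {linear FT -> fmod RT}) (hTP : forall p, gT (hT p) = p).

Definition aa n := hT (psi (x n)).
Definition NN n := fbnd (aa n).

Lemma CD (z : nat -> RT) K : exists t0 (r0 : nat -> R),
  [/\ T t0, forall l, (l < K)%N -> phi t0 * z l = phi (r0 l)
    & forall l, (K <= l)%N -> r0 l = 0].
Proof.
elim: K => [|K [t0 [r0 [T0 h1 h2]]]].
  by exists 1, (fun _ => 0); split => //; case: TM.
case: loc => [[_ hr _] _ _ _ _]; case: (hr (z K)) => r' [s' [Ts' e']].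
exists (t0 * s'), (fun l => if (l < K)%N then r0 l * s' else if l == K then r' * t0 else 0).
split.
- by case: TM => _ TM2; apply: TM2.
- move=> l; rewrite ltnS leq_eqVlt; case/orP => [/eqP ->|hl].
    by rewrite ltnn eqxx !rmorphM -e'; ring.
  by rewrite hl !rmorphM -(h1 l hl); ring.
move=> l hl; rewrite ltnNge (ltnW hl) /= (gtn_eqF hl) //.
Qed.

Definition Ptr n (p : R * (nat -> R)) :=
  [/\ T p.1, forall l, phi p.1 * (aa n)@_l = phi (p.2 l)
    & forall l, (NN n <= l)%N -> p.2 l = 0].
Definition tr n := epsilon (inhabits (1, fun _ => 0)) (Ptr n).
Lemma trP n : Ptr n (tr n).
Proof.
apply: epsilon_spec; case: (CD (fun l => (aa n)@_l) (NN n)) => t0 [r0 [T0 h1 h2]].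
exists (t0, r0); split => //= l; case: (ltnP l (NN n)) => hl; first exact: h1.
by rewrite h2 // fbndP // mulr0 rmorph0.
Qed.
Definition tt n := (tr n).1.
Definition rr n := (tr n).2.

Definition uu n := epsilon (inhabits 0)
  (fun o => T o /\ o *: (\sum_(l < NN n) rr n l *: x l - tt n *: x n) = 0).
Lemma uP n : T (uu n) /\ uu n *: (\sum_(l < NN n) rr n l *: x l - tt n *: x n) = 0.
Proof.
apply: (epsilon_spec (inhabits 0) (fun o => T o /\ o *: (\sum_(l < NN n) rr n l *: x l - tt n *: x n) = 0)).
case: loc => [_ _ _ _ hk]; apply: hk.
case: (trP n) => _ h1 _.
rewrite (psiB loc) (psi_sum loc) (psiZ loc).
have -> : \sum_(l < NN n) psi (rr n l *: x l) = phi (tt n) *: gT (aa n).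
  rewrite /gT scaler_sumr; apply: eq_bigr => l _.
  by rewrite (psiZ loc) -h1 scalerA.
by rewrite hTP subrr.
Qed.

Definition ww k l := \sum_(i < size (rel k)) (rel k)`_i * qq tt i * rr i l.
Definition vv k l := epsilon (inhabits 0) (fun o => T o /\ o * ww k l = 0).
Lemma vP k l : T (vv k l) /\ vv k l * ww k l = 0.
Proof.
apply: (epsilon_spec (inhabits 0) (fun o => T o /\ o * ww k l = 0)).
case: loc => [[_ _ hk] _ _ _ _]; apply: hk.
have -> : phi (ww k l) = phi (\prod_(j < size (rel k)) tt j) *
    (\sum_(i < size (rel k)) phi (rel k)`_i *: aa i)@_l.
  rewrite /ww !raddf_sum mulr_sumr; apply: eq_bigr => i _.
  rewrite /= fcoeffZ (bigD1 i) //= -/(qq tt i) !rmorphM.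
  case: (trP i) => _ h1 _; rewrite -h1 -/(tt i); ring.
have -> : \sum_(i < size (rel k)) phi (rel k)`_i *: aa i = 0.
  rewrite /aa; under eq_bigr do rewrite -linearZ.
  rewrite -linear_sum /=.
  have := relK k; rewrite /lincomb => e.
  under eq_bigr do rewrite -(psiZ loc).
  by rewrite -(psi_sum loc) e (psi0 loc) linear0.
by rewrite mcoeff0 mulr0.
Qed.

End TData.

Lemma Tdata (proj : projective FT) :
  exists (N : nat -> nat) (t u : nat -> R) (r v : nat -> nat -> R),
  [/\ forall n, T (t n), forall n, T (u n), forall k l, T (v k l),
      forall n l, (N n <= l)%N -> r n l = 0
    & (forall n, u n *: (\sum_(l < N n) r n l *: x l - t n *: x n) = 0) /\ forall k l, v k l * (\sum_(i < size (rel k)) (rel k)`_i * qq t i * r i l) = 0].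
Proof.
case: (proj _ _ (mkLin gT_lin) idfun gT_surj) => hT hTP.
have hTP' : forall p, gT (hT p) = p := hTP.
exists (NN hT), (tt hT), (uu hT), (rr hT), (vv hT); split.
- by move=> n; case: (trP hT n).
- by move=> n; case: (uP hTP' n).
- by move=> k l; case: (vP hT k l).
- by move=> n; case: (trP hT n).
split; first by move=> n; case: (uP hTP' n).
by move=> k l; case: (vP hT k l).
Qed.
End Tside.

End Aux.

Theorem proposition2p2 (R : comPzRingType) (F : lmodType R) (T : R -> Prop) :
  countably_presented F -> flat F -> multiplicative T ->
  (exists (RT : comPzRingType) (phi : {rmorphism R -> RT}) (FT : lmodType RT)
          (psi : F -> FT),
     is_localization_module T phi psi /\ projective FT) ->
  exists S : R -> Prop,
    [/\ forall r, S r -> T r, multiplicative S, countable_subset S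
      & forall (RS : comPzRingType) (phi : {rmorphism R -> RS})
               (FS : lmodType RS) (psi : F -> FS),
          is_localization_module S phi psi -> projective FS].
Proof.
move=> [x [rel [gen relK relC]]] _ TM [RT [phi [FT [psi [loc proj]]]]].
case: (Aux.Tdata relK gen loc TM proj) => N [t [u [r [v [Tt Tu Tv rN [AT BT]]]]]].
pose E (j : nat + nat + nat * nat) : R :=
  match j with inl (inl n) => t n | inl (inr n) => u n | inr (k, l) => v k l end.
have SM : forall a b : R,
    (exists s : seq (nat + nat + nat * nat), a = \prod_(j <- s) E j) ->
    (exists s : seq (nat + nat + nat * nat), b = \prod_(j <- s) E j) ->
    exists s : seq (nat + nat + nat * nat), a * b = \prod_(j <- s) E j.
  by move=> a b [s1 ->] [s2 ->]; exists (s1 ++ s2); rewrite big_cat.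
exists (fun a => exists s : seq (nat + nat + nat * nat), a = \prod_(j <- s) E j).
split.
- move=> a [s ->]; case: TM => T1 TM2; elim: s => [|j s IH]; first by rewrite big_nil.
  rewrite big_cons; apply: TM2 => //; case: j => [[n|n]|[k l]] /=; auto.
- by split; first by exists [::]; rewrite big_nil.
- exists (fun m : nat => \prod_(j <- odflt [::] (@choice.unpickle (seq (nat + nat + nat * nat)) m)) E j) => a; split.
    by case=> s ->; exists (choice.pickle s); rewrite choice.pickleK.
  by case=> m <-; exists (odflt [::] (@choice.unpickle (seq (nat + nat + nat * nat)) m)).
move=> RS phi' FS psi' loc'.
apply: (Aux.projS relC gen rN AT BT loc').
- by exists [::]; rewrite big_nil.
- exact: SM.
- by move=> n; exists [:: inl (inl n)]; rewrite big_seq1.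
- by move=> n; exists [:: inl (inr n)]; rewrite big_seq1.
by move=> k l; exists [:: inr (k, l)]; rewrite big_seq1.
Qed.
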